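(* For every frame $\mathcal{F}=\langle S,R\rangle$, $\mathcal{F}\vDash \bullet q\land\Delta p\land\circ(\neg q\to p)\to\circ(\neg q\to\circ(\neg r\to p))$ (for distinct propositional variables $p,q,r$) if and only if $R$ is transitive.
   Context: Fix a nonempty set $\mathbf{P}$ of propositional variables (containing distinct $p,q,r$). $\mathcal{L}(\nabla,\bullet)$: $\phi::=p\mid\neg\phi\mid\phi\land\phi\mid\nabla\phi\mid\bullet\phi$; $\Delta\phi:=\neg\nabla\phi$, $\circ\phi:=\neg\bullet\phi$. A frame is $\langle S,R\rangle$ with $S\neq\emptyset$, $R\subseteq S\times S$; a model based on it adds $V:\mathbf{P}\to\mathcal{P}(S)$. Truth: $\mathcal{M},s\vDash\nabla\phi$ iff there are $t,u$ with $sRt$, $sRu$, $\mathcal{M},t\vDash\phi$, $\mathcal{M},u\nvDash\phi$; $\mathcal{M},s\vDash\bullet\phi$ iff $\mathcal{M},s\vDash\phi$ and there is $t$ with $sRt$, $\mathcal{M},t\nvDash\phi$. $\mathcal{F}\vDash\phi$ means $\phi$ is true at every state of every model based on $\mathcal{F}$. *)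

(* Defs.v *)
From Stdlib Require Import Classical.

Inductive form (P : Type) : Type :=
| Var : P -> form P
| Neg : form P -> form P
| And : form P -> form P -> form P
| Nabla : form P -> form P
| Bullet : form P -> form P.
Arguments Var {P} _.
Arguments Neg {P} _.
Arguments And {P} _ _.
Arguments Nabla {P} _.
Arguments Bullet {P} _.

Definition Imp {P} (a b : form P) : form P := Neg (And a (Neg b)).
Definition Delta {P} (a : form P) : form P := Neg (Nabla a).
Definition Circ {P} (a : form P) : form P := Neg (Bullet a).

Record frame := { S : Type; S_inhabited : inhabited S; R : S -> S -> Prop }.

Fixpoint sat {P : Type} (F : frame) (V : P -> S F -> Prop) (s : S F) (phi : form P) : Prop :=
  match phi with
  | Var x => V x s
  | Neg a => ~ sat F V s a
  | And a b => sat F V s a /\ sat F V s b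
  | Nabla a => exists t u, R F s t /\ R F s u /\ sat F V t a /\ ~ sat F V u a
  | Bullet a => sat F V s a /\ exists t, R F s t /\ ~ sat F V t a
  end.

Definition frame_valid {P : Type} (F : frame) (phi : form P) : Prop :=
  forall (V : P -> S F -> Prop) (s : S F), sat F V s phi.

Definition transitive_frame (F : frame) : Prop :=
  forall x y z : S F, R F x y -> R F y z -> R F x z.

(* Main.v *)
Require Import Defs.
From Stdlib Require Import Classical.

Theorem proposition5 (P : Type) (p q r : P)
  (hpq : p <> q) (hpr : p <> r) (hqr : q <> r) (F : frame) :
  frame_valid F
    (Imp (And (And (Bullet (Var q)) (Delta (Var p))) (Circ (Imp (Neg (Var q)) (Var p))))
         (Circ (Imp (Neg (Var q)) (Circ (Imp (Neg (Var r)) (Var p))))))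
  <-> transitive_frame F.
Proof.
  split.
  - intros H x y z Hxy Hyz.
    destruct (classic (y = x)) as [E|Hne].
    { subst y. exact Hyz. }
    apply NNPP; intros Hxz.
    set (V := fun (v : P) (w : S F) => (v = p /\ R F x w) \/ (v = q /\ w <> y)).
    specialize (H V x). simpl in H. apply H. clear H.
    assert (Vp : forall w, V p w <-> R F x w).
    { intro w; unfold V; split; [intros [[_ h]|[h _]]; [exact h| congruence] | intro h; left; auto]. }
    assert (Vq : forall w, V q w <-> w <> y).
    { intro w; unfold V; split; [intros [[h _]|[_ h]]; [congruence| exact h] | intro h; right; auto]. }
    assert (Vr : forall w, ~ V r w).
    { intros w [[h _]|[h _]]; congruence. }
    split.
    + split; [split|].
      * split; [apply Vq; intro e; apply Hne; symmetry; exact e|].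
        exists y; split; [exact Hxy|]. rewrite Vq. tauto.
      * intros [t [u [Ht [Hu [_ Hnu]]]]]. apply Hnu, Vp, Hu.
      * intros [_ [t [Ht Hn]]]. apply Hn. intros [_ Hnp]. apply Hnp, Vp, Ht.
    + intros HH. apply HH. split.
      * intros [Hnq _]. apply Hnq, Vq. intro e; apply Hne; symmetry; exact e.
      * exists y; split; [exact Hxy|]. intros Hn. apply Hn. split.
        -- rewrite Vq; tauto.
        -- intros Hb. apply Hb. split.
           ++ intros [_ Hnp]. apply Hnp, Vp, Hxy.
           ++ exists z; split; [exact Hyz|]. intros Hn2. apply Hn2. split.
              ** apply Vr.
              ** intro Hpz. apply Hxz, Vp, Hpz.
  - intros HT V s. simpl.
    intros [[[[Hq [t [Hst Hnqt]]] HD] HC] HB].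
    assert (Pt : V p t).
    { apply NNPP; intro Hn. apply HC. split; [tauto|]. exists t. split; [exact Hst|]. tauto. }
    assert (Pall : forall w, R F s w -> V p w).
    { intros w Hw. apply NNPP; intro Hn. apply HD. exists t, w. auto. }
    apply HB. intros [_ [u [Hsu Hu]]]. apply Hu. intros [Hnqu Hb].
    apply Hb. intros [_ [w [Huw Hw]]]. apply Hw. intros [Hnr Hnp].
    apply Hnp, Pall. exact (HT _ _ _ Hsu Huw).
Qed.
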